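(* Let $\Lambda$ be the eigenspectrum of a $2S\times2S$ quantum CM ($S\ge2$) which satisfies the unique pairing condition but not the $(S-1)$-pure unique pairing condition. Write the unique perfect matching of $G(\Lambda)$ as $S$ pairs of eigenvalues $(\nu_i e^{-2r_i},\nu_i e^{2r_i})$, $i=1,\dots,S$, with $r_i\ge 0$, $\nu_i\ge 1$ and $\nu_1\ge\nu_2\ge\dots\ge\nu_S$ (so $\nu_2>1$), and let $D=\mathrm{diag}(\nu_1e^{-2r_1},\nu_1e^{2r_1},\dots,\nu_Se^{-2r_S},\nu_Se^{2r_S})$. Assume that no value occurs three or more times in the $4$-tuple $(\nu_1e^{-2r_1},\nu_1e^{2r_1},\nu_2e^{-2r_2},\nu_2e^{2r_2})$. Then there exists an orthogonal matrix $O$ such that $O^TDO$ is a quantum CM whose multiset of symplectic eigenvalues differs from $\{\nu_1,\dots,\nu_S\}$. Consequently (1) the set of symplectic eigenvalues (and squeezing parameters) of quantum CMs with eigenspectrum $\Lambda$ is not uniquely determined by $\Lambda$, and (2) there exist two quantum CMs with eigenspectrum $\Lambda$ that are related by an orthogonal transformation but not by any element of $\mathrm{SpO}(2S,\mathbb{R})$.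
   Context: Fix an integer $S\ge 1$. Coordinates of $\mathbb{R}^{2S}$ are ordered as $(q_1,p_1,\dots,q_S,p_S)$; coordinates $2i-1$ and $2i$ form the $i$-th mode. Let $\Omega=\bigoplus_{i=1}^S\begin{pmatrix}0&1\\-1&0\end{pmatrix}$. A real matrix $A$ is symplectic if $A^T\Omega A=\Omega$. $\mathrm{SpO}(2S,\mathbb{R})$ denotes the group of real $2S\times2S$ matrices that are both orthogonal and symplectic. A quantum CM is a real symmetric positive-definite $2S\times 2S$ matrix $\Gamma$ such that $\Gamma+i\Omega$ is positive semidefinite. By Williamson's theorem any real positive-definite $\Gamma$ can be written $\Gamma=A\,\mathrm{diag}(\nu_1,\nu_1,\dots,\nu_S,\nu_S)\,A^T$ with $A$ symplectic; the multiset $\{\nu_i\}$ (the symplectic eigenvalues, or thermal parameters) is uniquely determined by $\Gamma$, and $\Gamma$ is a quantum CM iff all $\nu_i\ge1$. Let $\Lambda=(\lambda_i)_{i=1}^{2S}$ be the eigenvalues of a quantum CM in non-ascending order. Let $G(\Lambda)$ be the graph with vertex set $\{1,\dots,2S\}$ and edge set $\{\{i,j\}: i<j,\ \lambda_i\lambda_j\ge 1\}$; an edge $\{i,j\}$ is pure if $\lambda_i\lambda_j=1$. $\Lambda$ satisfies the unique pairing condition if $G(\Lambda)$ has a unique perfect matching up to permutations of vertices carrying equal eigenvalues. $\Lambda$ satisfies the $t$-pure unique pairing condition if it satisfies the unique pairing condition and at least $t$ of the $S$ edges of this perfect matching are pure. *)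

(* Defs.v *)
From HB Require Import structures.
From mathcomp Require Import all_boot all_order fingroup perm all_algebra.
From mathcomp Require Import complex.
From mathcomp Require Import reals exp.
From mathcomp Require Import interval_inference topology normedtype sequences.
Set Implicit Arguments. Unset Strict Implicit. Unset Printing Implicit Defensive.
Import Order.TTheory GRing.Theory Num.Theory.
Local Open Scope ring_scope.

Section Defs.
Variable R : realType.
Variable S : nat.

(* the mode index of a coordinate k (0-based): coordinates 2i, 2i+1 form mode i *)
Definition mode_of (k : 'I_(S.*2)) : 'I_S :=
  Ordinal (etrans (ltn_half_double k S) (ltn_ord k)).

(* Omega = direct sum of [[0,1],[-1,0]] *)
Definition Omega : 'M[R]_(S.*2) :=
  \matrix_(k, l) (if mode_of k == mode_of l then
                    (if ~~ odd k && odd l then 1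
                     else if odd k && ~~ odd l then -1 else 0)
                  else 0).

Definition orthogonal_mx (A : 'M[R]_(S.*2)) : Prop := A^T *m A = 1%:M.
Definition symplectic_mx (A : 'M[R]_(S.*2)) : Prop := A^T *m Omega *m A = Omega.
Definition SpO (A : 'M[R]_(S.*2)) : Prop := orthogonal_mx A /\ symplectic_mx A.

Definition pos_def (G : 'M[R]_(S.*2)) : Prop :=
  forall v : 'cV[R]_(S.*2), v != 0 -> 0 < (v^T *m G *m v) 0 0.

Definition psd_C (M : 'M[R[i]]_(S.*2)) : Prop :=
  forall z : 'cV[R[i]]_(S.*2), 0 <= ((map_mx (@conjc R) z)^T *m M *m z) 0 0.

Definition GammaiOmega (G : 'M[R]_(S.*2)) : 'M[R[i]]_(S.*2) :=
  \matrix_(k, l) Complex (G k l) (Omega k l).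

Definition quantum_CM (G : 'M[R]_(S.*2)) : Prop :=
  G^T = G /\ pos_def G /\ psd_C (GammaiOmega G).

(* Williamson form: G = A diag(nu_1,nu_1,...,nu_S,nu_S) A^T with A symplectic;
   nu is then the (ordered list of) symplectic eigenvalues of G *)
Definition williamson (G : 'M[R]_(S.*2)) (nu : 'I_S -> R) : Prop :=
  exists A, symplectic_mx A /\
    G = A *m diag_mx (\row_k nu (mode_of k)) *m A^T.

Definition same_multiset (nu nu' : 'I_S -> R) : bool :=
  perm_eq [seq nu i | i <- enum 'I_S] [seq nu' i | i <- enum 'I_S].

Definition symp_eigs_differ (G : 'M[R]_(S.*2)) (nu : 'I_S -> R) : Prop :=
  forall nu', williamson G nu' -> ~~ same_multiset nu' nu.

Definition eigenspectrum (G : 'M[R]_(S.*2)) (Lam : 'I_(S.*2) -> R) : Prop :=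
  char_poly G = \prod_k ('X - (Lam k)%:P).

Definition nonascending (Lam : 'I_(S.*2) -> R) : Prop :=
  forall k l : 'I_(S.*2), (k <= l)%N -> Lam l <= Lam k.

(* perfect matchings of G(Lam), as fixed-point-free involutions whose pairs
   {k, m k} are edges (Lam k * Lam (m k) >= 1) *)
Definition perfect_matching (Lam : 'I_(S.*2) -> R) (m : 'I_(S.*2) -> 'I_(S.*2)) :=
  forall k, [/\ m (m k) = k, m k != k & 1 <= Lam k * Lam (m k)].

(* equal up to a permutation of vertices carrying equal eigenvalues *)
Definition matching_equiv (Lam : 'I_(S.*2) -> R) (m m' : 'I_(S.*2) -> 'I_(S.*2)) :=
  exists s : {perm 'I_(S.*2)},
    (forall k, Lam (s k) = Lam k) /\ (forall k, m' (s k) = s (m k)).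

Definition unique_pairing (Lam : 'I_(S.*2) -> R) : Prop :=
  exists m, perfect_matching Lam m /\
    forall m', perfect_matching Lam m' -> matching_equiv Lam m m'.

(* number of pure edges {k, m k} (each counted once, via k < m k) *)
Definition n_pure (Lam : 'I_(S.*2) -> R) (m : 'I_(S.*2) -> 'I_(S.*2)) : nat :=
  #|[set k : 'I_(S.*2) | (k < m k)%N & Lam k * Lam (m k) == 1]|.

Definition t_pure_unique_pairing (t : nat) (Lam : 'I_(S.*2) -> R) : Prop :=
  exists m, perfect_matching Lam m /\
    (forall m', perfect_matching Lam m' -> matching_equiv Lam m m') /\
    (t <= n_pure Lam m)%N.

Definition Ddiag (nu r : 'I_S -> R) (k : 'I_(S.*2)) : R :=
  if odd k then nu (mode_of k) * expR (2 * r (mode_of k))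
  else nu (mode_of k) * expR (- (2 * r (mode_of k))).

Definition Dmat (nu r : 'I_S -> R) : 'M[R]_(S.*2) := diag_mx (\row_k Ddiag nu r k).

End Defs.

(* Main.v *)
Require Import Defs.
From HB Require Import structures.
From mathcomp Require Import all_boot all_order fingroup perm all_algebra.
From mathcomp Require Import complex.
From mathcomp Require Import reals exp.
From mathcomp Require Import interval_inference topology normedtype sequences.
Import Order.TTheory GRing.Theory Num.Theory.
From mathcomp Require Import ring lra zify.
Local Open Scope ring_scope.


Module PA.
Set Implicit Arguments. Unset Strict Implicit. Unset Printing Implicit Defensive.

Section Basics.
Variable R : realType.
Variable S : nat.
Local Notation n := (S.*2).

Lemma co_lt (i : 'I_S) (b : bool) : (b + (val i).*2 < n)%N.
Proof. have := ltn_ord i; rewrite -!addnn; case: b => /=; lia. Qed.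

Definition co (i : 'I_S) (b : bool) : 'I_n := Ordinal (co_lt i b).

Lemma mode_co i b : mode_of (co i b) = i.
Proof. by apply: val_inj => /=; rewrite half_bit_double. Qed.

Lemma odd_co i b : odd (co i b) = b.
Proof. by rewrite /= oddD odd_double addbF; case: b. Qed.

Lemma co_mode (k : 'I_n) : co (mode_of k) (odd k) = k.
Proof. by apply: val_inj => /=; rewrite odd_double_half. Qed.

Lemma ord_eqE (k l : 'I_n) : (k == l) = (mode_of k == mode_of l) && (odd k == odd l).
Proof.
case: (k =P l) => [->|ne]; first by rewrite !eqxx.
apply/esym/negbTE/negP => /andP[/eqP h1 /eqP h2]; apply: ne.
by rewrite -(co_mode k) -(co_mode l) h1 h2.
Qed.

Definition par (k : 'I_n) : 'I_n := co (mode_of k) (~~ odd k).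

Lemma mode_par k : mode_of (par k) = mode_of k. Proof. exact: mode_co. Qed.
Lemma odd_par k : odd (par k) = ~~ odd k. Proof. exact: odd_co. Qed.
Lemma parK k : par (par k) = k.
Proof. by rewrite /par mode_par odd_par negbK co_mode. Qed.
Lemma par_inj : injective par. Proof. exact: can_inj parK. Qed.
Lemma par_neq k : (par k == k) = false.
Proof. by rewrite ord_eqE odd_par; case: (odd k); rewrite andbF. Qed.
Lemma eq_par k l : (l == par k) = (k == par l).
Proof. by apply/eqP/eqP => ->; rewrite parK. Qed.

Definition sg (k : 'I_n) : R := if odd k then -1 else 1.
Lemma sg_par k : sg (par k) = - sg k.
Proof. by rewrite /sg odd_par; case: (odd k); rewrite ?opprK. Qed.

Lemma OmegaE k l : Omega R S k l = if l == par k then sg k else 0.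
Proof.
rewrite mxE ord_eqE mode_par odd_par /sg.
case: (mode_of k =P mode_of l) => [e|ne]; last first.
  by rewrite (introF eqP (nesym ne)).
by rewrite e eqxx /=; case: (odd k); case: (odd l).
Qed.

Lemma sum_delta (i : 'I_n) (F : 'I_n -> R) :
  \sum_k (if k == i then F k else 0) = F i.
Proof. by rewrite -big_mkcond big_pred1_eq. Qed.

Lemma mulOmega (M : 'M[R]_n) i l : (M *m Omega R S) i l = M i (par l) * sg (par l).
Proof.
rewrite mxE -(sum_delta (par l) (fun k => M i k * sg k)).
apply: eq_bigr => k _; rewrite OmegaE eq_par.
by case: ifP; rewrite ?mulr0.
Qed.


Local Notation Om := (Omega R S).

Lemma sg2 k : sg k * sg k = 1.
Proof. by rewrite /sg; case: (odd k); rewrite ?mulrNN mulr1. Qed.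

Lemma OmOm : Om *m Om = - 1%:M.
Proof.
apply/matrixP => i l; rewrite mulOmega OmegaE !mxE (inj_eq par_inj) eq_sym.
case: eqP => [->|_]; last by rewrite mul0r oppr0.
by rewrite sg_par mulrN sg2.
Qed.

Lemma tr_diag (d : 'I_n -> R) (N : 'M[R]_n) :
  \tr ((diag_mx (\row_k d k) *m Om) *m (N *m Om)) = - \sum_i d i * N (par i) (par i).
Proof.
rewrite /mxtrace -sumrN; apply: eq_bigr => i _.
rewrite mxE (eq_bigr (fun k => if k == par i then d i * sg i * (N *m Om) k i else 0)).
  by rewrite sum_delta mulOmega sg_par -[RHS]mulr1 -(sg2 i); ring.
move=> k _; rewrite mul_diag_mx [(\matrix_(_,_) _) i k]mxE [(\row_(_ < _) _) _ _]mxE OmegaE.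
by case: ifP; rewrite ?mulr0 ?mul0r.
Qed.

Lemma symp_inv (A : 'M[R]_n) : symplectic_mx A ->
  let B := - (Om *m A^T *m Om) in B *m A = 1%:M /\ A^T *m Om = Om *m B.
Proof.
move=> hA B; have hA' : A^T *m (Om *m A) = Om by rewrite mulmxA.
split; first by rewrite /B mulNmx -!mulmxA hA' OmOm opprK.
by rewrite /B mulmxN !mulmxA OmOm !mulNmx mul1mx opprK.
Qed.

Lemma tr_inv (A : 'M[R]_n) (D : 'M[R]_n) : symplectic_mx A ->
  \tr ((A *m D *m A^T *m Om) *m (A *m D *m A^T *m Om)) = \tr ((D *m Om) *m (D *m Om)).
Proof.
move=> /symp_inv [BA AO]; set B := - _ in BA AO.
have e : A *m D *m A^T *m Om = A *m ((D *m Om) *m B).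
  by rewrite -!mulmxA AO.
rewrite e -mulmxA mxtrace_mulC !mulmxA.
rewrite -[D *m Om *m B *m A]mulmxA BA mulmx1.
by rewrite -[D *m Om *m D *m Om *m B *m A]mulmxA BA mulmx1.
Qed.


Lemma williamson_tr (G : 'M[R]_n) (nu' : 'I_S -> R) : williamson G nu' ->
  \tr ((G *m Om) *m (G *m Om)) = - \sum_k nu' (mode_of k) ^+ 2.
Proof.
case=> A [hA ->]; rewrite tr_inv // (tr_diag (fun k => nu' (mode_of k))).
congr (- _); apply: eq_bigr => i _.
by rewrite mxE eqxx mulr1n mxE mode_par expr2.
Qed.

End Basics.

Lemma sum_half (R : realType) m (g : nat -> R) :
  \sum_(k < m.*2) g (k./2) = \sum_(i < m) (g i + g i).
Proof.
elim: m => [|m IH]; first by rewrite !big_ord0.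
rewrite doubleS !big_ord_recr /= IH -addrA; congr (_ + (_ + _)).
  by rewrite doubleK.
by rewrite uphalf_double.
Qed.

Lemma sum_mode (R : realType) S (F : 'I_S -> R) :
  \sum_(k : 'I_(S.*2)) F (mode_of k) = \sum_i (F i + F i).
Proof.
pose g j := odflt 0 (omap F (insub j)).
transitivity (\sum_(k < S.*2) g (k./2)).
  by apply: eq_bigr => k _; rewrite /g -[k./2]/(val (mode_of k)) valK.
rewrite sum_half; apply: eq_bigr => i _.
by rewrite /g valK.
Qed.

Lemma same_sum (R : realType) S (nu1 nu2 : 'I_S -> R) (F : R -> R) :
  same_multiset nu1 nu2 -> \sum_i F (nu1 i) = \sum_i F (nu2 i).
Proof.
move=> h; transitivity (\sum_(x <- [seq nu1 i | i <- enum 'I_S]) F x).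
  by rewrite big_map big_enum.
by rewrite (perm_big _ h) big_map big_enum.
Qed.

Section Core.
Variable R : realType.
Variable S : nat.
Local Notation n := (S.*2).
Local Notation Om := (Omega R S).
Variables x y : 'I_n.
Hypothesis hxy : mode_of x != mode_of y.

Lemma xy_neq : (x == y) = false.
Proof. by apply/negbTE; apply: contraNneq hxy => ->. Qed.
Lemma yx_neq : (y == x) = false.
Proof. by rewrite eq_sym xy_neq. Qed.

Definition Pm (a b c : R) : 'M[R]_n := \matrix_(i, j)
  if i == x then (if j == x then a else if j == y then b else 0)
  else if i == y then (if j == x then b else if j == y then c else 0) else 0.

Lemma sum2 (F G : 'I_n -> R) :
  \sum_j (if j == x then F j else if j == y then G j else 0) = F x + G y.
Proof.
rewrite (bigD1 x) //= eqxx (bigD1 y) /=; last by rewrite yx_neq.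
rewrite yx_neq eqxx big1 ?addr0 // => j /andP[jy jx].
by rewrite (negbTE jx) (negbTE jy).
Qed.

Lemma sum2m (A B : R) (F : 'I_n -> R) :
  \sum_j (if j == x then A else if j == y then B else 0) * F j = A * F x + B * F y.
Proof.
rewrite -(sum2 (fun j => A * F j) (fun j => B * F j)); apply: eq_bigr => j _.
by case: ifP => _; [|case: ifP => _]; rewrite ?mul0r.
Qed.

Lemma qf_P a b c (w : 'I_n -> R) :
  \sum_i \sum_j Pm a b c i j * (w i * w j) =
  a * (w x * w x) + b * (w x * w y) + b * (w y * w x) + c * (w y * w y).
Proof.
rewrite (eq_bigr (fun i => if i == x then a * (w i * w x) + b * (w i * w y)
   else if i == y then b * (w i * w x) + c * (w i * w y) else 0)).
  by rewrite sum2 !addrA.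
move=> i _; under eq_bigr => j _ do rewrite mxE.
case: (i == x); first by rewrite (sum2m _ _ (fun j => w i * w j)).
case: (i == y); first by rewrite (sum2m _ _ (fun j => w i * w j)).
by rewrite big1 // => j _; rewrite mul0r.
Qed.

Lemma qf_D (d : 'I_n -> R) (w : 'I_n -> R) :
  \sum_i \sum_j diag_mx (\row_k d k) i j * (w i * w j) = \sum_i d i * w i ^+ 2.
Proof.
apply: eq_bigr => i _.
rewrite -(sum_delta i (fun j => d i * (w i * w j))); apply: eq_bigr => j _.
rewrite !mxE mulrb eq_sym; case: ifP => [/eqP->|]; last by rewrite mul0r.
by [].
Qed.

Definition Gm d a b c := diag_mx (\row_k d k) + Pm a b c.

Lemma qf_G d a b c (w : 'I_n -> R) :
  \sum_i \sum_j Gm d a b c i j * (w i * w j) = \sum_i d i * w i ^+ 2 +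
  (a * (w x * w x) + b * (w x * w y) + b * (w y * w x) + c * (w y * w y)).
Proof.
rewrite -qf_D -qf_P -big_split /=; apply: eq_bigr => i _.
rewrite -big_split /=; apply: eq_bigr => j _.
by rewrite !mxE mulrDl.
Qed.

Lemma Pm_sym a b c i j : Pm a b c j i = Pm a b c i j.
Proof.
by rewrite !mxE; case: (i == x); case: (j == x); case: (i == y); case: (j == y).
Qed.

Lemma Gm_sym d a b c i j : Gm d a b c j i = Gm d a b c i j.
Proof.
rewrite /Gm [(diag_mx _ + _) j i]mxE [(diag_mx _ + _) i j]mxE Pm_sym; congr (_ + _).
have [->|ne] := eqVneq i j; first by [].
by rewrite !mxE eq_sym (negbTE ne).
Qed.

Lemma qP_ge0 (a b c u v : R) : 0 <= a -> 0 <= c -> b * b <= a * c ->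
  0 <= a * (u * u) + b * (u * v) + b * (v * u) + c * (v * v).
Proof.
move=> ha hc hb; have [a0|apos] := eqVneq a 0.
  have b0 : b = 0 by apply/eqP; rewrite -sqrf_eq0 expr2; rewrite a0 mul0r in hb; apply/eqP/le_anti; rewrite hb /=; nra.
  by rewrite a0 b0 !mul0r !add0r; nra.
have ap : 0 < a by rewrite lt_def apos ha.
rewrite -(pmulr_rge0 _ ap).
have -> : a * (a * (u * u) + b * (u * v) + b * (v * u) + c * (v * v)) =
   (a * u + b * v) ^+ 2 + (a * c - b * b) * (v * v) by ring.
by apply: addr_ge0; [exact: sqr_ge0 | apply: mulr_ge0; [lra | nra]].
Qed.

End Core.

End PA.
Import PA.

Module PB.
Local Open Scope complex_scope.

Lemma Re_term (R : realType) (zi zj : R[i]) (g w : R) :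
  complex.Re (zi^* * (Complex g w) * zj) = g * (complex.Re zi * complex.Re zj + complex.Im zi * complex.Im zj) + w * (complex.Im zi * complex.Re zj - complex.Re zi * complex.Im zj).
Proof. case: zi => a b; case: zj => c e; rewrite /=. ring. Qed.
Lemma Im_term (R : realType) (zi zj : R[i]) (g w : R) :
  complex.Im (zi^* * (Complex g w) * zj) = g * (complex.Re zi * complex.Im zj - complex.Im zi * complex.Re zj) + w * (complex.Re zi * complex.Re zj + complex.Im zi * complex.Im zj).
Proof. case: zi => a b; case: zj => c e; rewrite /=. ring. Qed.

Lemma Re_sum (R : realType) (I : finType) (F : I -> R[i]) :
  complex.Re (\sum_i F i) = \sum_i complex.Re (F i).
Proof. by elim/big_rec2: _ => //= i a b _ <-; case: (F i); case: b. Qed.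
Lemma Im_sum (R : realType) (I : finType) (F : I -> R[i]) :
  complex.Im (\sum_i F i) = \sum_i complex.Im (F i).
Proof. by elim/big_rec2: _ => //= i a b _ <-; case: (F i); case: b. Qed.

Lemma antisym_sum (R : realType) (I : finType) (F : I -> I -> R) :
  (forall i j, F i j = - F j i) -> \sum_i \sum_j F i j = 0.
Proof.
move=> h; set T := (X in X = 0).
have : T = - T.
  rewrite {1}/T exchange_big /= /T -sumrN; apply: eq_bigr => i _.
  rewrite -sumrN; apply: eq_bigr => j _; exact: h.
lra.
Qed.

Lemma term_ge0 (R : realType) (a b s u v : R) : 0 < a -> 0 < b -> 1 <= a * b -> s * s = 1 ->
  0 <= a * (u * u) + b * (v * v) - 2 * s * u * v.
Proof.
move=> ha hb hab hs; rewrite -(pmulr_rge0 _ ha).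
have -> : a * (a * (u * u) + b * (v * v) - 2 * s * u * v) =
   (a * u - s * v) ^+ 2 + (a * b - s * s) * (v * v) by ring.
by apply: addr_ge0; [exact: sqr_ge0 | apply: mulr_ge0; [lra | nra]].
Qed.

Section Q.
Variable R : realType.
Variable S : nat.
Local Notation n := (S.*2).
Local Notation Om := (Omega R S).
Variables x y : 'I_n.
Hypothesis hxy : mode_of x != mode_of y.

Lemma par_sum (t : 'I_n -> R) : (forall i, 0 <= t i + t (par i)) -> 0 <= \sum_i t i.
Proof.
move=> h; have e : \sum_i t i = \sum_i t (par i) by exact: (reindex_inj (@par_inj S)).
have : 0 <= \sum_i (t i + t (par i)) by apply: sumr_ge0 => i _; exact: h.
rewrite big_split /= -e; lra.
Qed.

Lemma OmN i j : Om j i = - Om i j.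
Proof.
rewrite !OmegaE eq_par; case: eqP => [->|]; last by rewrite oppr0.
by rewrite sg_par.
Qed.

Lemma Om_sum (f : 'I_n -> 'I_n -> R) :
  \sum_i \sum_j Om i j * f i j = \sum_i sg R (i) * f i (par i).
Proof.
apply: eq_bigr => i _; rewrite -(sum_delta (par i) (fun j => sg R i * f i j)).
by apply: eq_bigr => j _; rewrite OmegaE; case: ifP; rewrite ?mul0r.
Qed.

Lemma GiO_E (G : 'M[R]_n) i j : GammaiOmega G i j = Complex (G i j) (Om i j).
Proof. by rewrite mxE. Qed.

End Q.

Section Q2.
Variable R : realType.
Variable S : nat.
Local Notation n := (S.*2).
Local Notation Om := (Omega R S).
Variables x y : 'I_n.
Hypothesis hxy : mode_of x != mode_of y.

Lemma V_E (M : 'M[R[i]]_n) (z : 'cV[R[i]]_n) :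
  ((map_mx (@conjc R) z)^T *m M *m z) 0 0 = \sum_j \sum_i (z i 0)^* * M i j * z j 0.
Proof.
rewrite mxE; apply: eq_bigr => j _; rewrite mxE mulr_suml; apply: eq_bigr => i _.
by rewrite [(_^T) 0 i]mxE [map_mx _ _ i 0]mxE.
Qed.

Variables (d : 'I_n -> R) (a b c : R).
Hypotheses (hd : forall k, 0 < d k) (hdp : forall k, 1 <= d k * d (par k))
  (ha : 0 <= a) (hc : 0 <= c) (hb : b * b <= a * c).
Local Notation G := (Gm x y d a b c).

Lemma quantum_Gm : quantum_CM G.
Proof.
split; first by apply/matrixP => i j; rewrite mxE Gm_sym.
split.
  move=> v hv.
  have e : (v^T *m G *m v) 0 0 = \sum_i \sum_j G i j * (v i 0 * v j 0).
    rewrite mxE; under eq_bigr => j _ do rewrite mxE mulr_suml.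
    rewrite exchange_big; apply: eq_bigr => i _; apply: eq_bigr => j _ /=.
    rewrite [(_^T) 0 i]mxE; ring.
  rewrite e qf_G //.
  have [i0 hi0] : exists i, v i 0 != 0.
    case: (pickP (fun i => v i 0 != 0)) => [i0 hi0|h0]; first by exists i0.
    exfalso; move/eqP: hv; apply; apply/matrixP => i j; rewrite ord1 mxE.
    by apply/eqP; have := h0 i => /= /negbFE.
  have q := qP_ge0 (v x 0) (v y 0) ha hc hb.
  have p0 : 0 < d i0 * v i0 0 ^+ 2.
    by apply: mulr_gt0; [exact: hd | rewrite exprn_even_gt0 //= hi0 orbT].
  have r0 : 0 <= \sum_(i | i != i0) d i * v i 0 ^+ 2.
    by apply: sumr_ge0 => i _; apply: mulr_ge0; [exact: ltW | exact: sqr_ge0].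
  rewrite (bigD1 i0) //=; lra.
move=> z; rewrite V_E lecE; apply/andP; split.
  rewrite Im_sum; under eq_bigr => j _ do (rewrite Im_sum; under eq_bigr => i _ do rewrite GiO_E Im_term).
  apply/eqP; rewrite antisym_sum // => i j.
  by rewrite Gm_sym (OmN _ _ j i); ring.
rewrite Re_sum; under eq_bigr => j _ do (rewrite Re_sum; under eq_bigr => i _ do rewrite GiO_E Re_term).
rewrite exchange_big /=.
set u := fun k => complex.Re (z k 0); set v := fun k => complex.Im (z k 0).
have -> : \sum_i \sum_j (G i j * (complex.Re (z i 0) * complex.Re (z j 0) + complex.Im (z i 0) * complex.Im (z j 0)) +
      Om i j * (complex.Im (z i 0) * complex.Re (z j 0) - complex.Re (z i 0) * complex.Im (z j 0))) =
   \sum_i \sum_j G i j * (u i * u j) + \sum_i \sum_j G i j * (v i * v j) +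
   \sum_i \sum_j Om i j * (v i * u j - u i * v j).
  rewrite -!big_split; apply: eq_bigr => i _; rewrite -!big_split; apply: eq_bigr => j _ /=.
  rewrite /u /v; ring.
rewrite !qf_G // Om_sum.
have q1 := qP_ge0 (u x) (u y) ha hc hb; have q2 := qP_ge0 (v x) (v y) ha hc hb.
have hsum : 0 <= \sum_i d i * u i ^+ 2 + \sum_i d i * v i ^+ 2 +
   \sum_i sg R i * (v i * u (par i) - u i * v (par i)).
  rewrite -!big_split; apply: par_sum => i /=; rewrite parK sg_par.
  have t1 := @term_ge0 R _ _ _ (u i) (v (par i)) (hd i) (hd (par i)) (hdp i) (sg2 R i).
  have h' : 1 <= d (par i) * d i by have := hdp (par i); rewrite parK.
  have s2 : (- sg R i) * (- sg R i) = 1 by rewrite mulrNN sg2.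
  have t2 := @term_ge0 R _ _ _ (u (par i)) (v i) (hd (par i)) (hd i) h' s2.
  set e1 := (X in 0 <= X) in t1; set e2 := (X in 0 <= X) in t2.
  have -> : d i * u i ^+ 2 + d i * v i ^+ 2 + sg R i * (v i * u (par i) - u i * v (par i)) +
    (d (par i) * u (par i) ^+ 2 + d (par i) * v (par i) ^+ 2 +
      - sg R i * (v (par i) * u i - u (par i) * v i)) = e1 + e2.
    by rewrite /e1 /e2; ring.
  exact: addr_ge0.
rewrite /=; lra.
Qed.
End Q2.

Section Tr.
Variable R : realType.
Variable S : nat.
Local Notation n := (S.*2).
Local Notation Om := (Omega R S).
Variables x y : 'I_n.
Hypothesis hxy : mode_of x != mode_of y.
Local Notation P := (@Pm R S x y).

Lemma P_col0 a b c k j : j != x -> j != y -> P a b c k j = 0.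
Proof. by move=> h1 h2; rewrite mxE (negbTE h1) (negbTE h2); case: (k == x); case: (k == y). Qed.
Lemma P_row0 a b c i j : i != x -> i != y -> P a b c i j = 0.
Proof. by move=> h1 h2; rewrite mxE (negbTE h1) (negbTE h2). Qed.

Lemma parx1 : par x != x. Proof. by rewrite par_neq. Qed.
Lemma parx2 : par x != y.
Proof. by apply: contraNneq hxy => <-; rewrite mode_par. Qed.
Lemma pary1 : par y != y. Proof. by rewrite par_neq. Qed.
Lemma pary2 : par y != x.
Proof. by apply: contraNneq hxy => <-; rewrite mode_par. Qed.

Lemma tr_PP a b c : \tr ((P a b c *m Om) *m (P a b c *m Om)) = 0.
Proof.
rewrite /mxtrace big1 // => i _; rewrite mxE big1 // => k _.
rewrite !mulOmega.
have [->|hx] := eqVneq i x.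
  by rewrite (P_col0 _ _ _ _ _ parx1 parx2) !mul0r mulr0.
have [->|hy] := eqVneq i y.
  by rewrite (P_col0 _ _ _ _ _ pary2 pary1) !mul0r mulr0.
by rewrite (P_row0 _ _ _ _ _ hx hy) !mul0r.
Qed.

Lemma tr_Gm (d : 'I_n -> R) a b c :
  \tr ((Gm x y d a b c *m Om) *m (Gm x y d a b c *m Om)) =
  - \sum_k d k * d (par k) - 2 * (d (par x) * a + d (par y) * c).
Proof.
rewrite /Gm !mulmxDl !mulmxDr !mxtraceD tr_PP addr0.
rewrite [\tr ((P a b c *m Om) *m _)]mxtrace_mulC !tr_diag.
have e1 : \sum_i d i * diag_mx (\row_k d k) (par i) (par i) = \sum_k d k * d (par k).
  by apply: eq_bigr => i _; rewrite !mxE eqxx mulr1n.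
have e2 : \sum_i d i * P a b c (par i) (par i) = d (par x) * a + d (par y) * c.
  rewrite (reindex_inj (@par_inj S)) /=.
  rewrite (eq_bigr (fun i => (if i == x then a else if i == y then c else 0) * d (par i))).
    by rewrite sum2m ?yx_neq // !(mulrC (d _)).
  move=> i _; rewrite parK mulrC mxE.
  by case: eqP => [->|_]; rewrite ?eqxx //; case: eqP => [->|_]; rewrite ?eqxx.
rewrite e1 e2; ring.
Qed.
End Tr.

End PB.
Import PB.



Section Rot.
Variable R : realType.
Variable S : nat.
Local Notation n := (S.*2).
Variables x y : 'I_n.
Hypothesis hxy : mode_of x != mode_of y.
Variables cs sn : R.
Hypothesis hcs : cs * cs + sn * sn = 1.

Definition Rot : 'M[R]_n := \matrix_(k, i)
  if i == x then (if k == x then cs else if k == y then - sn else 0)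
  else if i == y then (if k == x then sn else if k == y then cs else 0)
  else (if k == i then 1 else 0).

Lemma col_sum i (g : 'I_n -> R) : \sum_k Rot k i * g k =
  if i == x then cs * g x - sn * g y else if i == y then sn * g x + cs * g y else g i.
Proof.
under eq_bigr => k _ do rewrite mxE.
case: (i == x); first by rewrite (sum2m hxy) mulNr.
case: (i == y); first by rewrite (sum2m hxy).
by rewrite -(sum_delta i g); apply: eq_bigr => k _; case: ifP; rewrite ?mul1r ?mul0r.
Qed.

Lemma Rot_orth : orthogonal_mx Rot.
Proof.
apply/matrixP => i j; rewrite mxE (eq_bigr (fun k => Rot k i * Rot k j)); last first.
  by move=> k _; rewrite mxE.
rewrite col_sum !mxE.
have xy := xy_neq hxy; have yx := yx_neq hxy.
have [e|ix] := eqVneq i x; rewrite /= ?e ?eqxx.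
  have [e'|jx] := eqVneq j x; rewrite /= ?e' ?eqxx ?xy ?yx /=; first by rewrite -hcs; ring.
  have [e'|jy] := eqVneq j y; rewrite /= ?e' ?eqxx ?xy ?yx /=; first by ring.
  by rewrite ?mulr0 ?subr0 ?addr0.
have [e|iy] := eqVneq i y; rewrite /= ?e ?eqxx ?yx.
  have [e'|jx] := eqVneq j x; rewrite /= ?e' ?eqxx ?xy ?yx /=; first by ring.
  have [e'|jy] := eqVneq j y; rewrite /= ?e' ?eqxx ?xy ?yx /=; first by rewrite -hcs; ring.
  by rewrite ?mulr0 ?subr0 ?addr0.
rewrite ?(negbTE ix) ?(negbTE iy).
have [e'|jx] := eqVneq j x; rewrite /= ?e' ?eqxx ?(negbTE ix) ?(negbTE iy) //.
have [e'|jy] := eqVneq j y; rewrite /= ?e' ?eqxx ?(negbTE ix) ?(negbTE iy) //.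
by case: (i == j).
Qed.

Lemma modc (E1 E2 K : R) : E1 - E2 = K * (cs * cs + sn * sn - 1) -> E1 = E2.
Proof. by rewrite hcs subrr mulr0 => /eqP; rewrite subr_eq0 => /eqP. Qed.

Lemma Rot_conj (d : 'I_n -> R) :
  Rot^T *m diag_mx (\row_k d k) *m Rot =
  Gm x y d (sn * sn * (d y - d x)) (- (cs * sn * (d y - d x))) (- (sn * sn * (d y - d x))).
Proof.
apply/matrixP => i j; rewrite mxE (eq_bigr (fun k => Rot k i * (d k * Rot k j))); last first.
  by move=> k _; rewrite mul_mx_diag !mxE mulrA.
rewrite col_sum !mxE.
have xy := xy_neq hxy; have yx := yx_neq hxy.
have [e|ix] := eqVneq i x; rewrite /= ?e ?eqxx.
  have [e'|jx] := eqVneq j x; rewrite /= ?e' ?eqxx ?xy ?yx /= ?mulr1n.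
    by apply: (modc _ _ (d x)); ring.
  have [e'|jy] := eqVneq j y; rewrite /= ?e' ?eqxx ?xy ?yx /= ?mulr0n; first by ring.
  by rewrite ?mulr0 ?subr0 ?addr0 ?mulr0n.
have [e|iy] := eqVneq i y; rewrite /= ?e ?eqxx ?yx.
  have [e'|jx] := eqVneq j x; rewrite /= ?e' ?eqxx ?xy ?yx /= ?mulr0n; first by ring.
  have [e'|jy] := eqVneq j y; rewrite /= ?e' ?eqxx ?xy ?yx /= ?mulr1n.
    by apply: (modc _ _ (d y)); ring.
  by rewrite ?mulr0 ?subr0 ?addr0 ?mulr0n.
rewrite ?(negbTE ix) ?(negbTE iy).
have [e'|jx] := eqVneq j x; rewrite /= ?e' ?eqxx ?(negbTE ix) ?(negbTE iy) /= ?mulr0n ?mulr0 ?addr0 //.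
have [e'|jy] := eqVneq j y; rewrite /= ?e' ?eqxx ?(negbTE ix) ?(negbTE iy) /= ?mulr0n ?mulr0 ?addr0 //.
by case: (i == j); rewrite ?mulr1n ?mulr0n ?mulr1 ?mulr0 ?addr0.
Qed.

End Rot.

Lemma params (R : realType) (dx dy e : R) : 0 < dx -> 0 < dy -> 0 < e -> e <= 1 ->
  let t := e ^+ 2 * (dx * dy / (dx + dy) ^+ 2) in
  [/\ 0 < t, t <= 1,
   (1 - t) * t * (dy - dx) ^+ 2 <= (e * dx + t * (dy - dx)) * (e * dy - t * (dy - dx)),
   0 <= e * dx + t * (dy - dx) & 0 <= e * dy - t * (dy - dx)].
Proof.
move=> hx hy he he1 t.
set M := dx + dy; set k := dx * dy / M ^+ 2.
have hM : 0 < M by rewrite /M; lra.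
have hM2 : 0 < M ^+ 2 by rewrite exprn_gt0.
have hk : k * M ^+ 2 = dx * dy by rewrite /k divfK // gt_eqF.
have kp : 0 < k by rewrite /k divr_gt0 // mulr_gt0.
have kM : k * M <= dx.
  have : k * M * M <= dx * M by rewrite -mulrA -expr2 hk /M; nra.
  by rewrite ler_pM2r.
have kMy : k * M <= dy.
  have : k * M * M <= dy * M by rewrite -mulrA -expr2 hk /M; nra.
  by rewrite ler_pM2r.
have k1 : k <= 1.
  have : k * M ^+ 2 <= 1 * M ^+ 2 by rewrite hk mul1r /M; nra.
  by rewrite ler_pM2r.
have e2 : 0 < e ^+ 2 by rewrite exprn_gt0.
have e21 : e ^+ 2 <= e by rewrite expr2; nra.
have tp : 0 < t by rewrite /t mulr_gt0.
have d2 : (dy - dx) ^+ 2 <= M ^+ 2 by rewrite /M; nra.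
have td : t * (dy - dx) ^+ 2 <= e ^+ 2 * (dx * dy).
  rewrite -hk /t -mulrA ler_pM2l //.
  by rewrite ler_pM2l.
have tM : t * M <= e * dx.
  have : t * M = e ^+ 2 * (k * M) by rewrite /t -mulrA.
  move=> ->; nra.
have tMy : t * M <= e * dy.
  have : t * M = e ^+ 2 * (k * M) by rewrite /t -mulrA.
  move=> ->; nra.
split.
- exact: tp.
- rewrite /t; have h : e ^+ 2 * k <= 1 * k by rewrite ler_pM2r //; lra.
  change (e ^+ 2 * k <= 1); lra.
- have h1 : 0 <= e * t * (dy - dx) ^+ 2 by apply: mulr_ge0; [nra | exact: sqr_ge0].
  have e3 : (e * dx + t * (dy - dx)) * (e * dy - t * (dy - dx)) =
    e ^+ 2 * (dx * dy) + e * t * (dy - dx) ^+ 2 - t ^+ 2 * (dy - dx) ^+ 2 by ring.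
  rewrite e3; have -> : (1 - t) * t * (dy - dx) ^+ 2 = t * (dy - dx) ^+ 2 - t ^+ 2 * (dy - dx) ^+ 2 by ring.
  lra.
- have : - M <= dy - dx by rewrite /M; lra.
  rewrite /M in tM *; nra.
- have : dy - dx <= M by rewrite /M; lra.
  rewrite /M in tMy *; nra.
Qed.

Section Shift.
Variable R : realType.
Variable S : nat.
Local Notation n := (S.*2).
Variables x y : 'I_n.
Hypothesis hxy : mode_of x != mode_of y.

Lemma Gm_shift (d d0 : 'I_n -> R) a b c :
  (forall k, k != x -> k != y -> d0 k = d k) ->
  Gm x y d a b c = Gm x y d0 (a + (d x - d0 x)) b (c + (d y - d0 y)).
Proof.
move=> hd; apply/matrixP => i j; rewrite !mxE.
have xy := xy_neq hxy; have yx := yx_neq hxy.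
have [e|ix] := eqVneq i x; rewrite /= ?e ?eqxx.
  have [e'|jx] := eqVneq j x; rewrite /= ?e' ?eqxx ?xy ?yx /= ?mulr1n; first by ring.
  by case: (j == y); rewrite ?mulr0n.
have [e|iy] := eqVneq i y; rewrite /= ?e ?eqxx ?yx.
  have [e'|jx] := eqVneq j x; rewrite /= ?e' ?eqxx ?xy ?yx /= ?mulr0n //.
  have [e'|jy] := eqVneq j y; rewrite /= ?e' ?eqxx ?xy ?yx /= ?mulr1n ?mulr0n //.
  ring.
rewrite hd //; case: (i == j) => //.
Qed.
End Shift.

Lemma char_conj (R : realType) n (O M : 'M[R]_n) : O^T *m O = 1%:M ->
  char_poly (O^T *m M *m O) = char_poly M.
Proof.
move=> hO; rewrite /char_poly /char_poly_mx.
set Op := map_mx polyC O.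
have hOp : Op^T *m Op = 1%:M by rewrite /Op map_trmx -map_mxM hO map_mx1.
have e : 'X%:M - map_mx polyC (O^T *m M *m O) = Op^T *m ('X%:M - map_mx polyC M) *m Op.
  rewrite !map_mxM -map_trmx -/Op mulmxBr mulmxBl; congr (_ - _).
  by rewrite -mulmxA -scalar_mxC mulmxA hOp mul1mx.
rewrite e !det_mulmx mulrAC -det_mulmx hOp det1 mul1r.
done.
Qed.

Lemma char_diag (R : realType) n (d : 'I_n -> R) :
  char_poly (diag_mx (\row_k d k)) = \prod_k ('X - (d k)%:P).
Proof.
rewrite char_poly_trig ?diag_mx_is_trig //; apply: eq_bigr => i _.
by rewrite !mxE eqxx mulr1n.
Qed.



Section Comb.
Variable R : realType.
Variable S : nat.
Local Notation n := (S.*2).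

Lemma Ddiag_par (nu r : 'I_S -> R) j :
  Ddiag nu r j * Ddiag nu r (par j) = nu (mode_of j) ^+ 2.
Proof.
have h := expRxMexpNx_1 (2 * r (mode_of j)).
set A := expR _ in h; set B := expR _ in h.
rewrite /Ddiag mode_par odd_par -/A -/B.
transitivity (nu (mode_of j) ^+ 2 * (A * B)); last by rewrite h mulr1.
by case: (odd j) => /=; ring.
Qed.

Lemma Ddiag_co (nu r : 'I_S -> R) i b :
  Ddiag nu r (co i b) = if b then nu i * expR (2 * r i) else nu i * expR (- (2 * r i)).
Proof. by rewrite /Ddiag odd_co mode_co. Qed.

Lemma equiv_trans (Lam : 'I_n -> R) m m0 m' :
  matching_equiv Lam m m0 -> matching_equiv Lam m m' -> matching_equiv Lam m0 m'.
Proof.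
move=> [s1 [h1L h1m]] [s2 [h2L h2m]].
exists (s1^-1 * s2)%g; split => k; rewrite !permM.
  by rewrite h2L -{2}(permKV s1 k) h1L.
rewrite h2m; congr (s2 _); apply: (@perm_inj _ s1).
by rewrite -h1m !permKV.
Qed.

Variables (Lam : 'I_n -> R) (nu r : 'I_S -> R) (tau : {perm 'I_n}).
Hypothesis htau : forall k, Lam (tau k) = Ddiag nu r k.
Hypothesis hnu : forall i, 1 <= nu i.

Definition m0 (k : 'I_n) : 'I_n := tau (par ((tau^-1)%g k)).

Lemma m0_perfect : perfect_matching Lam m0.
Proof.
move=> k; split.
- by rewrite /m0 permK parK permKV.
- rewrite /m0; apply/negP => /eqP h.
  have : par ((tau^-1)%g k) = (tau^-1)%g k by apply: (can_inj (permK tau)); rewrite h permKV.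
  by move/eqP; rewrite par_neq.
- rewrite /m0 -{1}(permKV tau k) !htau Ddiag_par.
  by have := hnu (mode_of ((tau^-1)%g k)); rewrite expr2; nra.
Qed.

Lemma par_co (i : 'I_S) b : par (co i b) = co i (~~ b).
Proof. by rewrite /par mode_co odd_co. Qed.

Lemma m0_co i b : m0 (tau (co i b)) = tau (co i (~~ b)).
Proof. by rewrite /m0 permK par_co. Qed.

Lemma co_neq (i : 'I_S) : tau (co i true) != tau (co i false).
Proof. by rewrite (inj_eq perm_inj) ord_eqE !odd_co andbF. Qed.

Lemma nu1_gt1 (hS : (2 <= S)%N) (hup : unique_pairing Lam)
  (hnotpure : ~ t_pure_unique_pairing S.-1 Lam)
  (hnudesc : forall i j : 'I_S, (i <= j)%N -> nu j <= nu i) : 1 < nu (Ordinal hS).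
Proof.
rewrite ltNge; apply/negP => hle.
have hall : forall i : 'I_S, (0 < i)%N -> nu i = 1.
  move=> i hi; apply/le_anti; rewrite hnu andbT.
  exact: le_trans (hnudesc (Ordinal hS) i hi) hle.
apply: hnotpure; exists m0; split; first exact: m0_perfect.
split.
  case: hup => m [hm hall'] m' hm'.
  exact: (@equiv_trans Lam _ _ _ (hall' _ m0_perfect) (hall' _ hm')).
rewrite /n_pure.
set A := [set k | _ & _].
pose f (i : 'I_S) : 'I_n := if (tau (co i false) < tau (co i true))%N
  then tau (co i false) else tau (co i true).
pose B := [set i : 'I_S | (0 < i)%N].
have cB : #|B| = S.-1.
  have -> : B = [set~ Ordinal (ltnW hS)].
    by apply/setP => i; rewrite !inE lt0n; congr (~~ _).
  by rewrite cardsC1 card_ord.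
have prod1 : forall (i : 'I_S) (b : bool), (0 < i)%N ->
    Lam (tau (co i b)) * Lam (m0 (tau (co i b))) == 1.
  move=> i b hi; rewrite m0_co !htau -par_co Ddiag_par mode_co hall //.
  by rewrite expr1n.
have sub : f @: B \subset A.
  apply/subsetP => k /imsetP [i hi ->]; rewrite inE /f.
  move: hi; rewrite inE => hi.
  case: ifP => h; rewrite prod1 // andbT m0_co //.
  rewrite ltn_neqAle leqNgt h andbT.
  by have := co_neq i; apply: contra => /eqP /val_inj ->.
have inj : {in B &, injective f}.
  move=> i j _ _.
  have key : forall b b', tau (co i b) = tau (co j b') -> i = j.
    by move=> b b' /perm_inj /(congr1 (@mode_of S)); rewrite !mode_co.
  by rewrite /f; case: ifP => _; case: ifP => _ /key.
by rewrite -cB -(card_in_imset inj); apply: subset_leq_card.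
Qed.

End Comb.


Lemma symp_trmx (R : realType) S (A : 'M[R]_(S.*2)) : symplectic_mx A -> symplectic_mx A^T.
Proof.
move=> hA; have [BA _] := symp_inv hA.
have AB := mulmx1C BA.
rewrite /symplectic_mx trmxK.
have h : A *m Omega R S *m A^T *m Omega R S = - 1%:M.
  by move: AB; rewrite mulmxN -!mulmxA => /(congr1 (fun M => - M)); rewrite opprK !mulmxA.
have := congr1 (fun M => M *m Omega R S) h.
by rewrite -mulmxA OmOm mulmxN mulmx1 mulNmx mul1mx => /(congr1 (fun M => - M)); rewrite !opprK.
Qed.

Lemma Pm0 (R : realType) S (x y : 'I_(S.*2)) : Pm x y 0 0 0 = 0 :> 'M[R]_(S.*2).
Proof. by apply/matrixP => i j; rewrite !mxE; do !case: ifP. Qed.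

Lemma tr_D (R : realType) S (x y : 'I_(S.*2)) (hxy : mode_of x != mode_of y) (d : 'I_(S.*2) -> R) :
  \tr ((diag_mx (\row_k d k) *m Omega R S) *m (diag_mx (\row_k d k) *m Omega R S)) =
  - \sum_k d k * d (par k).
Proof.
have := @tr_Gm R S x y hxy d 0 0 0; rewrite /Gm Pm0 addr0 => ->.
by rewrite !mulr0 addr0 mulr0 subr0.
Qed.

Lemma sum_sq_same (R : realType) S (w w' : 'I_S -> R) : same_multiset w w' ->
  \sum_(k : 'I_(S.*2)) w (mode_of k) ^+ 2 = \sum_(k : 'I_(S.*2)) w' (mode_of k) ^+ 2.
Proof.
move=> h.
have := sum_mode (fun i => w i ^+ 2); rewrite /= => ->.
have := sum_mode (fun i => w' i ^+ 2); rewrite /= => ->.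
exact: (same_sum (fun v => v ^+ 2 + v ^+ 2) h).
Qed.
Theorem proposition1 (R : realType) (S : nat) (hS : (2 <= S)%N)
    (Lam : 'I_(S.*2) -> R)
    (* Lam is the eigenspectrum, in non-ascending order, of a quantum CM *)
    (hLam : exists G : 'M[R]_(S.*2), quantum_CM G /\ eigenspectrum G Lam)
    (hdesc : nonascending Lam)
    (hup : unique_pairing Lam)
    (hnotpure : ~ t_pure_unique_pairing S.-1 Lam)
    (nu r : 'I_S -> R)
    (hr : forall i, 0 <= r i) (hnu : forall i, 1 <= nu i)
    (hnudesc : forall i j : 'I_S, (i <= j)%N -> nu j <= nu i)
    (* the pairs (nu_i e^{-2r_i}, nu_i e^{2r_i}) are the pairs of the
       perfect matching of G(Lam): Lam is the diagonal of D up to a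
       relabelling tau of the vertices *)
    (hpairs : exists tau : {perm 'I_(S.*2)}, forall k, Lam (tau k) = Ddiag nu r k)
    (* no value occurs 3 or more times among the first four entries of D *)
    (h4 : forall x : R,
        (count (pred1 x)
           [:: nu (Ordinal (ltnW hS)) * expR (- (2 * r (Ordinal (ltnW hS))));
               nu (Ordinal (ltnW hS)) * expR (2 * r (Ordinal (ltnW hS)));
               nu (Ordinal hS) * expR (- (2 * r (Ordinal hS)));
               nu (Ordinal hS) * expR (2 * r (Ordinal hS))]%R < 3)%N) :
  (exists O : 'M[R]_(S.*2), orthogonal_mx O /\
      quantum_CM (O^T *m Dmat nu r *m O) /\
      symp_eigs_differ (O^T *m Dmat nu r *m O) nu)
  /\
  (* (1) the symplectic eigenvalues are not determined by Lam *)
  (exists G1 G2 : 'M[R]_(S.*2),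
      [/\ quantum_CM G1, quantum_CM G2, eigenspectrum G1 Lam, eigenspectrum G2 Lam &
          forall nu1 nu2, williamson G1 nu1 -> williamson G2 nu2 ->
            ~~ same_multiset nu1 nu2])
  /\
  (* (2) two quantum CMs with spectrum Lam related orthogonally but not by SpO *)
  (exists G1 G2 : 'M[R]_(S.*2),
      [/\ quantum_CM G1, quantum_CM G2, eigenspectrum G1 Lam, eigenspectrum G2 Lam &
          (exists O, orthogonal_mx O /\ G2 = O^T *m G1 *m O) /\
          ~ (exists A, SpO A /\ G2 = A^T *m G1 *m A)]).
Proof.
have [tau htau] := hpairs.
set i0 : 'I_S := Ordinal (ltnW hS); set i1 : 'I_S := Ordinal hS.
have n1 : 1 < nu i1 := @nu1_gt1 R S Lam nu r tau htau hnu hS hup hnotpure hnudesc.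
have n0 : nu i1 <= nu i0 := hnudesc i0 i1 isT.
set d := Ddiag nu r.
have dpos : forall k, 0 < d k.
  move=> k; rewrite /d /Ddiag; case: (odd k); apply: mulr_gt0;
  by [apply: lt_le_trans (hnu _); exact: ltr01 | exact: expR_gt0].
have dpar : forall k, d k * d (par k) = nu (mode_of k) ^+ 2 := @Ddiag_par R S nu r.
have [x [y [hxm [hym [hdxy hdpxy]]]]] : exists x y, [/\ mode_of x = i0, mode_of y = i1,
    d x != d y & d (par x) != d (par y)].
  set a1 := nu i0 * expR (- (2 * r i0)); set b1 := nu i0 * expR (2 * r i0).
  set a2 := nu i1 * expR (- (2 * r i1)); set b2 := nu i1 * expR (2 * r i1).
  have da1 : d (co i0 false) = a1 by rewrite /d Ddiag_co.
  have db1 : d (co i0 true) = b1 by rewrite /d Ddiag_co.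
  have da2 : d (co i1 false) = a2 by rewrite /d Ddiag_co.
  have db2 : d (co i1 true) = b2 by rewrite /d Ddiag_co.
  have h4' : forall v, (count_mem v [:: a1; b1; a2; b2] < 3)%N := h4.
  have H : (a1 != a2) && (b1 != b2) || (a1 != b2) && (b1 != a2).
    case: (boolP ((a1 != a2) && (b1 != b2))) => [//|h1].
    case: (boolP ((a1 != b2) && (b1 != a2))) => [//|h2].
    exfalso; rewrite negb_and !negbK in h1; rewrite negb_and !negbK in h2.
    case/ssrbool.orP: h1 => /eqP e1; case/ssrbool.orP: h2 => /eqP e2.
    - by have := h4' a1; rewrite -e1 -e2 /= !eqxx; case: (_ == _).
    - by rewrite -e1 in e2; have := h4' a1; rewrite -e1 e2 /= !eqxx; case: (_ == _).
    - by have := h4' b2; rewrite e1 e2 /= !eqxx; case: (_ == _).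
    - by have := h4' b1; rewrite -e1 -e2 /= !eqxx; case: (_ == _).
  case/ssrbool.orP: H => /andP [h1 h2].
    exists (co i0 false), (co i1 false); split; rewrite ?mode_co ?par_co //=.
      by rewrite da1 da2.
    by rewrite db1 db2.
  exists (co i0 false), (co i1 true); split; rewrite ?mode_co ?par_co //=.
    by rewrite da1 db2.
  by rewrite db1 da2.
have vx : (x./2 = 0)%N := congr1 val hxm.
have vy : (y./2 = 1)%N := hym.
have hym' : mode_of y = i1 by apply: val_inj; rewrite /= vy.
have hxy : mode_of x != mode_of y.
  by apply/eqP => ee; have := congr1 val ee; rewrite /= vx vy.
have xy := xy_neq hxy; have yx := yx_neq hxy.
have nu12 : 1 < nu i1 ^+ 2 by rewrite expr2; nra.
set kap := (nu i1 ^+ 2)^-1.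
have kp : 0 < kap by rewrite invr_gt0; lra.
have kn : kap * nu i1 ^+ 2 = 1 by rewrite mulVf // gt_eqF //; lra.
have k1 : kap < 1 by rewrite invf_lt1 //; lra.
have kn0 : 1 <= kap * nu i0 ^+ 2.
  rewrite -kn ler_pM2l //; rewrite !expr2; nra.
pose d0 k := if k == x then kap * d x else if k == y then kap * d y else d k.
have d0x : d0 x = kap * d x by rewrite /d0 eqxx.
have d0y : d0 y = kap * d y by rewrite /d0 yx eqxx.
have d0o : forall k, k != x -> k != y -> d0 k = d k.
  by move=> k h1 h2; rewrite /d0 (negbTE h1) (negbTE h2).
have hd0 : forall k, 0 < d0 k.
  by move=> k; rewrite /d0; case: ifP => _; [|case: ifP => _]; rewrite ?mulr_gt0.
have px1 := parx1 S x; have px2 := parx2 S x y hxy; have py1 := pary1 S y; have py2 := pary2 S x y hxy.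
have hdp0 : forall k, 1 <= d0 k * d0 (par k).
  have Hx : 1 <= kap * d x * d (par x) by rewrite -mulrA dpar hxm.
  have Hy : 1 <= kap * d y * d (par y) by rewrite -mulrA dpar hym' kn.
  move=> k; have [->|kx] := eqVneq k x.
    by rewrite d0x d0o.
  have [->|ky] := eqVneq k y.
    by rewrite d0y d0o.
  have [ekx|kx'] := eqVneq (par k) x.
    have -> : k = par x by rewrite -ekx parK.
    by rewrite parK d0x d0o // mulrC.
  have [eky|ky'] := eqVneq (par k) y.
    have -> : k = par y by rewrite -eky parK.
    by rewrite parK d0y d0o // mulrC.
  rewrite !d0o // dpar; have := hnu (mode_of k); rewrite expr2; nra.
set e := 1 - kap.
have ep : 0 < e by rewrite /e; lra.
have e1 : e <= 1 by rewrite /e; lra.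
have [tp t1 hq ha hc] := @params R _ _ _ (dpos x) (dpos y) ep e1.
set t := e ^+ 2 * _ in tp t1 hq ha hc.
set sn := Num.sqrt t; set cs := Num.sqrt (1 - t).
have hs2 : sn * sn = t by rewrite -expr2 sqr_sqrtr // ltW.
have hc2 : cs * cs = 1 - t by rewrite -expr2 sqr_sqrtr // subr_ge0.
have hcs : cs * cs + sn * sn = 1 by rewrite hs2 hc2 subrK.
set O := @Rot R S x y cs sn.
have hO : orthogonal_mx O := @Rot_orth R S x y hxy cs sn hcs.
set dl := d y - d x.
have hG : O^T *m Dmat nu r *m O = Gm x y d (sn * sn * dl) (- (cs * sn * dl)) (- (sn * sn * dl)).
  exact: (@Rot_conj R S x y hxy cs sn hcs d).
set G := O^T *m Dmat nu r *m O.
have qG : quantum_CM G.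
  have E1 : sn * sn * dl + (d x - kap * d x) = e * d x + t * (d y - d x).
    by rewrite hs2 /dl /e; ring.
  have E2 : - (sn * sn * dl) + (d y - kap * d y) = e * d y - t * (d y - d x).
    by rewrite hs2 /dl /e; ring.
  have E3 : - (cs * sn * dl) * - (cs * sn * dl) = (1 - t) * t * (d y - d x) ^+ 2.
    rewrite mulrNN; transitivity ((cs * cs) * (sn * sn) * dl ^+ 2); first by ring.
    by rewrite hc2 hs2.
  rewrite /G hG (@Gm_shift R S x y hxy d d0 _ _ _ d0o) d0x d0y.
  apply: (@quantum_Gm R S x y hxy d0) => //.
  - by rewrite E1.
  - by rewrite E2.
  - by rewrite E3 E1 E2.
have sumdd : \sum_k d k * d (par k) = \sum_k nu (mode_of k) ^+ 2.
  by apply: eq_bigr => k _; rewrite dpar.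
set SN := \sum_k nu (mode_of k) ^+ 2 in sumdd.
set X := 2 * t * dl * (d (par x) - d (par y)).
have TG : \tr ((G *m Omega R S) *m (G *m Omega R S)) = - SN - X.
  by rewrite /G hG (@tr_Gm R S x y hxy d) sumdd hs2 /X; ring.
have TD : \tr ((Dmat nu r *m Omega R S) *m (Dmat nu r *m Omega R S)) = - SN.
  by rewrite /Dmat (@tr_D R S x y hxy d) sumdd.
have Xne : X != 0.
  have tn : t != 0 by rewrite gt_eqF.
  have two : (2:R) != 0 by rewrite pnatr_eq0.
  have dln : dl != 0 by rewrite /dl subr_eq0 eq_sym.
  have dpn : d (par x) - d (par y) != 0 by rewrite subr_eq0.
  exact: (mulf_neq0 (mulf_neq0 (mulf_neq0 two tn) dln) dpn).
have qD : quantum_CM (Dmat nu r).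
  have -> : Dmat nu r = Gm x y d 0 0 0 by rewrite /Gm Pm0 addr0.
  apply: (@quantum_Gm R S x y hxy d) => //.
  by move=> k; rewrite dpar; have := hnu (mode_of k); rewrite expr2; nra.
have eD : eigenspectrum (Dmat nu r) Lam.
  rewrite /eigenspectrum /Dmat char_diag [RHS](reindex_inj (@perm_inj _ tau)) /=.
  by apply: eq_bigr => k _; rewrite htau.
have eG : eigenspectrum G Lam.
  by rewrite /eigenspectrum /G (@char_conj R _ O (Dmat nu r) hO); exact: eD.
have notsame : forall w, williamson G w -> ~~ same_multiset w nu.
  move=> w hw; apply/negP => hs.
  have h1 := williamson_tr hw; rewrite TG in h1.
  have h2 := @sum_sq_same R S _ _ hs; rewrite -/SN in h2.
  by move/eqP: Xne; apply; lra.
split.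
  exists O; split; first exact: hO.
  by split; [exact: qG | move=> w hw; exact: notsame].
split.
  exists (Dmat nu r), G; split => // w1 w2 h1 h2; apply/negP => hs.
  have k1' := williamson_tr h1; rewrite TD in k1'.
  have k2' := williamson_tr h2; rewrite TG in k2'.
  have k3 := @sum_sq_same R S _ _ hs.
  by move/eqP: Xne; apply; lra.
exists (Dmat nu r), G; split => //; split; first by exists O.
case=> A [[_ hA] hGA].
have := @tr_inv R S A^T (Dmat nu r) (@symp_trmx R S A hA).
rewrite trmxK -hGA TG TD => h.
by move/eqP: Xne; apply; lra.
Qed.
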